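(* Let $M$ be a von Neumann algebra acting on a separable Hilbert space $\mathcal H$, $\Omega\in\mathcal H$ a separating vector for $M$, and $T,S\in\mathcal B(\mathcal H)$ injective operators such that the maps $x\mapsto Tx\Omega$ and $x\mapsto Sx\Omega$ from $M$ to $\mathcal H$ are compact. Let $L_1(x):=\|Tx\Omega\|$ and $L_2(x):=\|Sx\Omega\|$ (dual-Lip-norms on $M$). Then $J(x,y):=\|Tx\Omega+Sy\Omega\|$, $(x,y)\in M\oplus M$, belongs to $\mathcal L((M,L_1),(M,L_2))$, and $$\mathrm{dist}_{qGH^*}((M,L_1),(M,L_2))\le\sup_{x\in M,\ \|x\|=1}\|(T-S)x\Omega\|.$$
   Context: A dual-Lip-norm on a von Neumann algebra $M$ is a norm on $M$ (everywhere finite) inducing the $w^*$-topology on bounded subsets of $M$; a Lip-von Neumann algebra (LvNA) is a pair $(M,L_M)$ with $L_M$ such a norm. A linear map is compact if it maps the unit ball to a relatively norm-compact set. $L_M$ is extended to $\mathcal M_2(M)$ ($2\times2$ matrices over $M$) by $L_M((a_{ij}))=\max_{i,j}L_M(a_{ij})$. For LvNAs $(M,L_M)$, $(N,L_N)$, $\mathcal L((M,L_M),(N,L_N))$ is the set of seminorms $L$ on $M\oplus N$ with $L(x,0)=L_M(x)$ and $L(0,y)=L_N(y)$ for all $x\in M,y\in N$; each such $L$ is extended to $\mathcal M_2(M)\oplus\mathcal M_2(N)\cong\mathcal M_2(M\oplus N)$ by entrywise maximum. $X_M=\{x\in\mathcal M_2(M): x\ge 0,\ \|x\|\le 1\}$,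 and similarly $X_N$. For such $L$, $\mathrm{dist}^L_H(X_M,X_N)=\max\big(\sup_{x\in X_M}\inf_{y\in X_N}L(x,-y),\ \sup_{y\in X_N}\inf_{x\in X_M}L(x,-y)\big)$, and $\mathrm{dist}_{qGH^*}((M,L_M),(N,L_N))=\inf_{L}\mathrm{dist}^L_H(X_M,X_N)$, the infimum over $L\in\mathcal L((M,L_M),(N,L_N))$. *)

(* Defs.v *)
From HB Require Import structures.
From mathcomp Require Import all_boot all_order all_algebra.
From mathcomp Require Import complex.
From mathcomp Require Import boolp classical_sets reals constructive_ereal.
From mathcomp Require Import ereal.

Set Implicit Arguments.
Unset Strict Implicit.
Unset Printing Implicit Defensive.

Import Order.TTheory GRing.Theory Num.Theory.
Local Open Scope ring_scope.
Local Open Scope classical_set_scope.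
Local Open Scope complex_scope.

Section Hilbert.
Variable R : realType.
Notation C := (R[i]).
Variable V : lmodType C.
Variable ip : V -> V -> C.   (* inner product, linear in the first variable *)

Definition is_inner_product : Prop :=
  [/\ (forall a u w v, ip (a *: u + w) v = a * ip u v + ip w v),
      (forall u v, ip u v = (ip v u)^*),
      (forall v, 0 <= ip v v) &
      (forall v, ip v v = 0 -> v = 0)].

Definition hnorm (v : V) : R := Num.sqrt (complex.Re (ip v v)).

Definition hcomplete : Prop :=
  forall u : nat -> V,
    (forall e : R, 0 < e -> exists N, forall m n, (N <= m)%N -> (N <= n)%N ->
        hnorm (u m - u n) < e) ->
    exists l, forall e : R, 0 < e -> exists N, forall n, (N <= n)%N ->
        hnorm (u n - l) < e.

Definition hseparable : Prop :=
  exists d : nat -> V, forall v (e : R), 0 < e -> exists n, hnorm (v - d n) < e.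

Definition bounded_op (A : V -> V) : Prop :=
  (forall (a : C) u w, A (a *: u + w) = a *: A u + A w) /\
  exists c : R, forall v, hnorm (A v) <= c * hnorm v.

Definition opnorm (A : V -> V) : R :=
  inf [set c : R | 0 <= c /\ forall v, hnorm (A v) <= c * hnorm v].

Definition is_adjoint (A B : V -> V) : Prop :=
  forall u v, ip (A u) v = ip u (B v).

Definition commutant (S : set (V -> V)) : set (V -> V) :=
  [set y | bounded_op y /\ forall x, S x -> y \o x = x \o y].

Definition vN_algebra (M : set (V -> V)) : Prop :=
  [/\ (forall x, M x -> bounded_op x),
      M id,
      (forall x y, M x -> M y -> M (fun v => x v + y v)),
      (forall (a : C) x, M x -> M (fun v => a *: x v)) &
      (forall x y, M x -> M y -> M (x \o y))] /\
  (forall x, M x -> exists2 y, M y & is_adjoint x y) /\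
  M = commutant (commutant M).

Definition separating (M : set (V -> V)) (Om : V) : Prop :=
  forall x, M x -> x Om = 0 -> x = (fun _ => 0).

(* f : M -> H is compact: the image of the unit ball of M is relatively
   norm-compact in H (sequential formulation, H being complete metric) *)
Definition compact_map (M : set (V -> V)) (f : (V -> V) -> V) : Prop :=
  forall u : nat -> (V -> V), (forall n, M (u n) /\ opnorm (u n) <= 1) ->
    exists phi : nat -> nat, (forall n, (phi n < phi n.+1)%N) /\
      exists l : V, forall e : R, 0 < e -> exists N, forall n, (N <= n)%N ->
        hnorm (f (u (phi n)) - l) < e.

(* 2x2 matrices over operators, acting on H (+) H *)
Definition mat2 := 'I_2 -> 'I_2 -> (V -> V).

Definition act2 (a : mat2) (xi : 'I_2 -> V) : 'I_2 -> V :=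
  fun i => \sum_(j < 2) a i j (xi j).

Definition ip2 (xi eta : 'I_2 -> V) : C := \sum_(i < 2) ip (xi i) (eta i).

Definition hnorm2 (xi : 'I_2 -> V) : R := Num.sqrt (complex.Re (ip2 xi xi)).

Definition XM (M : set (V -> V)) : set mat2 :=
  [set a | [/\ (forall i j, M (a i j)),
              (forall xi, 0 <= ip2 (act2 a xi) xi) &
              (forall xi, hnorm2 (act2 a xi) <= hnorm2 xi)]].

Definition zero_op : V -> V := fun _ => 0.

Definition Lset (M : set (V -> V)) (L1 L2 : (V -> V) -> R)
    (L : (V -> V) * (V -> V) -> R) : Prop :=
  [/\ (forall x y x' y', M x -> M y -> M x' -> M y' ->
         L ((fun v => x v + x' v), (fun v => y v + y' v)) <= L (x, y) + L (x', y')),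
      (forall (c : C) x y, M x -> M y ->
         L ((fun v => c *: x v), (fun v => c *: y v)) = complex.Re `|c| * L (x, y)),
      (forall x, M x -> L (x, zero_op) = L1 x) &
      (forall y, M y -> L (zero_op, y) = L2 y)].

Definition Lmat (L : (V -> V) * (V -> V) -> R) (a b : mat2) : R :=
  \big[Num.max/0]_(i < 2) \big[Num.max/0]_(j < 2) L (a i j, b i j).

Definition negm (b : mat2) : mat2 := fun i j v => - b i j v.

Definition distH (M : set (V -> V)) (L : (V -> V) * (V -> V) -> R) : \bar R :=
  Order.max
    (ereal_sup [set ereal_inf [set (Lmat L x (negm y))%:E | y in XM M] | x in XM M])
    (ereal_sup [set ereal_inf [set (Lmat L x (negm y))%:E | x in XM M] | y in XM M]).

Definition dist_qGH (M : set (V -> V)) (L1 L2 : (V -> V) -> R) : \bar R :=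
  ereal_inf [set distH M L | L in Lset M L1 L2].

End Hilbert.

(* Main.v *)
Require Import Defs.
From HB Require Import structures.
From mathcomp Require Import all_boot all_order all_algebra.
From mathcomp Require Import complex.
From mathcomp Require Import boolp classical_sets reals constructive_ereal.
From mathcomp Require Import ereal.
From mathcomp Require Import ring lra.
Import Order.TTheory GRing.Theory Num.Theory.
Local Open Scope ring_scope.
Local Open Scope classical_set_scope.
Notation Rec := complex.Re.
Notation Imc := complex.Im.

Lemma ip0l {R : realType} {V : lmodType R[i]} {ip : V -> V -> R[i]}
  (Hip : is_inner_product ip) v : ip 0 v = 0.
Proof.
case: Hip => lin _ _ _.
have h := lin 1 0 0 v. rewrite scale1r addr0 mul1r in h.
have : ip 0 v + 0 = ip 0 v + ip 0 v by rewrite addr0 -h.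
by move/addrI => <-.
Qed.

Lemma ipDl {R : realType} {V : lmodType R[i]} {ip : V -> V -> R[i]}
  (Hip : is_inner_product ip) u w v : ip (u + w) v = ip u v + ip w v.
Proof. case: Hip => lin _ _ _. by have := lin 1 u w v; rewrite scale1r mul1r. Qed.

Lemma ipZl {R : realType} {V : lmodType R[i]} {ip : V -> V -> R[i]}
  (Hip : is_inner_product ip) a u v : ip (a *: u) v = a * ip u v.
Proof.
have := ip0l Hip v. case: Hip => lin _ _ _ h0.
by have := lin a u 0 v; rewrite addr0 h0 addr0.
Qed.

Lemma ipNl {R : realType} {V : lmodType R[i]} {ip : V -> V -> R[i]}
  (Hip : is_inner_product ip) u v : ip (- u) v = - ip u v.
Proof. by rewrite -scaleN1r (ipZl Hip) mulN1r. Qed.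

Lemma ipDr {R : realType} {V : lmodType R[i]} {ip : V -> V -> R[i]}
  (Hip : is_inner_product ip) u v w : ip u (v + w) = ip u v + ip u w.
Proof.
have hD := ipDl Hip. case: Hip => _ sym _ _.
by rewrite (sym u (v + w)) hD raddfD (sym u v) (sym u w).
Qed.

Lemma ipZr {R : realType} {V : lmodType R[i]} {ip : V -> V -> R[i]}
  (Hip : is_inner_product ip) a u v : ip u (a *: v) = (a^*)%C * ip u v.
Proof.
have hZ := ipZl Hip. case: Hip => _ sym _ _.
by rewrite (sym u (a *: v)) hZ rmorphM (sym u v).
Qed.

Lemma ipNr {R : realType} {V : lmodType R[i]} {ip : V -> V -> R[i]}
  (Hip : is_inner_product ip) u v : ip u (- v) = - ip u v.
Proof. by rewrite -scaleN1r (ipZr Hip) rmorphN1 mulN1r. Qed.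

Lemma ip_real {R : realType} {V : lmodType R[i]} {ip : V -> V -> R[i]}
  (Hip : is_inner_product ip) v : ip v v = ((Rec (ip v v))%:C)%C.
Proof.
case: Hip => _ _ pos _. have := ger0_Im (pos v).
by case: (ip v v) => a b /= ->.
Qed.

Lemma Re_ip_ge0 {R : realType} {V : lmodType R[i]} {ip : V -> V -> R[i]}
  (Hip : is_inner_product ip) v : 0 <= Rec (ip v v).
Proof. case: Hip => _ _ pos _. by have := pos v; rewrite lecE => /andP[_]. Qed.

Lemma hnorm_ge0 (R : realType) (V : lmodType R[i]) (ip : V -> V -> R[i]) v :
  0 <= hnorm ip v.
Proof. exact: sqrtr_ge0. Qed.

Lemma hnorm_sq {R : realType} {V : lmodType R[i]} {ip : V -> V -> R[i]}
  (Hip : is_inner_product ip) v : hnorm ip v ^+ 2 = Rec (ip v v).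
Proof. by rewrite /hnorm sqr_sqrtr // (Re_ip_ge0 Hip). Qed.

Lemma hnorm_eq0 {R : realType} {V : lmodType R[i]} {ip : V -> V -> R[i]}
  (Hip : is_inner_product ip) v : hnorm ip v = 0 -> v = 0.
Proof.
move/eqP; rewrite /hnorm sqrtr_eq0 => h.
have e : Rec (ip v v) = 0 by apply/le_anti; rewrite h (Re_ip_ge0 Hip).
have := ip_real Hip v. case: Hip => _ _ _ def. rewrite e => h2; exact: def.
Qed.

Lemma hnorm0 {R : realType} {V : lmodType R[i]} {ip : V -> V -> R[i]}
  (Hip : is_inner_product ip) : hnorm ip 0 = 0.
Proof. by rewrite /hnorm (ip0l Hip) sqrtr0. Qed.

Lemma Re_sq (R : realType) (a : R[i]) (p : R) :
  Rec (a * ((a^*)%C * (p%:C)%C)) = ((Rec a)^+2 + (Imc a)^+2) * p.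
Proof. case: a => ar ai. simpc. rewrite /=. ring. Qed.

Lemma hnormZ {R : realType} {V : lmodType R[i]} {ip : V -> V -> R[i]}
  (Hip : is_inner_product ip) a v : hnorm ip (a *: v) = Rec `|a| * hnorm ip v.
Proof.
rewrite /hnorm (ipZl Hip) (ipZr Hip) (ip_real Hip v) Re_sq normc_def /=.
by rewrite sqrtrM // addr_ge0 // sqr_ge0.
Qed.

Lemma CS {R : realType} {V : lmodType R[i]} {ip : V -> V -> R[i]}
  (Hip : is_inner_product ip) u v : Rec (ip u v) <= hnorm ip u * hnorm ip v.
Proof.
have [a0|a0] := eqVneq (hnorm ip u) 0.
  by rewrite (hnorm_eq0 Hip _ a0) (ip0l Hip) (hnorm0 Hip) mul0r; exact: lexx.
have [b0|b0] := eqVneq (hnorm ip v) 0.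
  rewrite (hnorm_eq0 Hip _ b0) (hnorm0 Hip) mulr0.
  case: (Hip) => _ sym _ _. by rewrite sym (ip0l Hip) conjc0.
have apos : 0 < hnorm ip u by rewrite lt0r a0 hnorm_ge0.
have bpos : 0 < hnorm ip v by rewrite lt0r b0 hnorm_ge0.
set a := hnorm ip u in a0 apos *. set b := hnorm ip v in b0 bpos *.
have := Re_ip_ge0 Hip ((b%:C)%C *: u - (a%:C)%C *: v).
rewrite !(ipDl Hip, ipNl Hip, ipZl Hip, ipDr Hip, ipNr Hip, ipZr Hip, conjc_real).
rewrite (ip_real Hip u) (ip_real Hip v) -!(hnorm_sq Hip) -/a -/b.
case: (Hip) => _ sym _ _. rewrite (sym v u).
case: (ip u v) => r1 r2. simpc. rewrite /= => h.
have hab : 0 < a * b by rewrite mulr_gt0.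
nra.
Qed.

Lemma hnormD {R : realType} {V : lmodType R[i]} {ip : V -> V -> R[i]}
  (Hip : is_inner_product ip) u v : hnorm ip (u + v) <= hnorm ip u + hnorm ip v.
Proof.
have hc := CS Hip u v.
have ha := @hnorm_ge0 _ _ ip u. have hb := @hnorm_ge0 _ _ ip v.
rewrite -(ler_sqr (x:= hnorm ip (u+v))) ?nnegrE ?addr_ge0 ?hnorm_ge0 //.
rewrite (hnorm_sq Hip).
rewrite !(ipDl Hip, ipDr Hip) (ip_real Hip u) (ip_real Hip v) -!(hnorm_sq Hip).
case: (Hip) => _ sym _ _. rewrite (sym v u).
move: hc. set a := hnorm ip u. set b := hnorm ip v.
case: (ip u v) => r1 r2. simpc. rewrite /= => hc. nra.
Qed.

Lemma norm_realC (R : realType) (x : R) : Rec `|(x%:C)%C| = `|x|.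
Proof. by rewrite normc_def /= expr0n addr0 sqrtr_sqr. Qed.


Lemma lin_props (R : realType) (V : lmodType R[i]) (A : V -> V)
  (HA : forall (a : R[i]) u w, A (a *: u + w) = a *: A u + A w) :
  [/\ A 0 = 0, (forall u w, A (u + w) = A u + A w),
      (forall a u, A (a *: u) = a *: A u) & (forall u, A (- u) = - A u)].
Proof.
have A0 : A 0 = 0.
  have h := HA 1 0 0. rewrite scale1r addr0 scale1r in h.
  have : A 0 + 0 = A 0 + A 0 by rewrite addr0 -h.
  by move/addrI => <-.
have AZ : forall a u, A (a *: u) = a *: A u.
  by move=> a u; have := HA a u 0; rewrite addr0 A0 addr0.
split=> //.
- by move=> u w; have := HA 1 u w; rewrite !scale1r.
- by move=> u; rewrite -scaleN1r AZ scaleN1r.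
Qed.

Lemma hnorm2_single {R : realType} {V : lmodType R[i]} {ip : V -> V -> R[i]}
  (Hip : is_inner_product ip) (v : V) (j : 'I_2) :
  hnorm2 ip (fun k => if k == j then v else 0) = hnorm ip v.
Proof.
rewrite /hnorm2 /ip2 (bigD1 j) //= eqxx big1 ?addr0 //.
by move=> k /negbTE ->; rewrite (ip0l Hip).
Qed.

Lemma hnorm2_ge {R : realType} {V : lmodType R[i]} {ip : V -> V -> R[i]}
  (Hip : is_inner_product ip) (eta : 'I_2 -> V) (i : 'I_2) :
  hnorm ip (eta i) <= hnorm2 ip eta.
Proof.
rewrite /hnorm2 /ip2 (bigD1 i) //=.
have : 0 <= \sum_(k < 2 | k != i) ip (eta k) (eta k).
  apply: sumr_ge0 => k _. by case: Hip => _ _ pos _.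
have := Re_ip_ge0 Hip (eta i).
rewrite /hnorm. move: (ip (eta i) (eta i)) => p.
move: (\sum_(k < 2 | k != i) ip (eta k) (eta k)) => s.
rewrite lecE => hp /andP[_ hs].
rewrite ler_sqrt; last by case: p hp s hs => a b hp [c d] hs; simpc; rewrite /= addr_ge0.
by case: p hp s hs => a b hp [c d] hs; simpc; rewrite /= lerDl.
Qed.

Theorem mainTheorem13 (R : realType) (V : lmodType R[i]) (ip : V -> V -> R[i])
  (Hip : is_inner_product ip) (Hcomp : hcomplete ip) (Hsep : hseparable ip)
  (M : set (V -> V)) (HM : vN_algebra ip M)
  (Om : V) (HOm : separating M Om)
  (T S : V -> V) (HT : bounded_op ip T) (HS : bounded_op ip S)
  (HTinj : injective T) (HSinj : injective S)
  (HTc : compact_map ip M (fun x => T (x Om)))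
  (HSc : compact_map ip M (fun x => S (x Om))) :
  let L1 := fun x : V -> V => hnorm ip (T (x Om)) in
  let L2 := fun x : V -> V => hnorm ip (S (x Om)) in
  let J := fun p : (V -> V) * (V -> V) => hnorm ip (T (p.1 Om) + S (p.2 Om)) in
  Lset M L1 L2 J /\
  (dist_qGH ip M L1 L2 <=
     ereal_sup (0%E |` [set (hnorm ip (T (x Om) - S (x Om)))%:E
                       | x in [set x | M x /\ opnorm ip x = 1%R]]))%E.
Proof.
move=> L1 L2 J.
case: HT => /lin_props[T0 TD TZ TN] _.
case: HS => /lin_props[S0 SD SZ SN] _.
case: HM => [[Mbnd _ _ Mscal _] _].
have LJ : Lset M L1 L2 J.
  split.
  - move=> x y x' y' _ _ _ _; rewrite /J /= TD SD addrACA.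
    exact: hnormD.
  - by move=> c x y _ _; rewrite /J /= TZ SZ -scalerDr (hnormZ Hip).
  - by move=> x _; rewrite /J /L1 /zero_op /= S0 addr0.
  - by move=> y _; rewrite /J /L2 /zero_op /= T0 add0r.
split=> //.
set K := ereal_sup _.
have K0 : (0 <= K)%E by apply: ereal_sup_ubound; left.
have key : forall w, M w -> (forall v, hnorm ip (w v) <= hnorm ip v) ->
    ((hnorm ip (T (w Om) - S (w Om)))%:E <= K)%E.
  move=> w Mw contr.
  pose Sw := [set c : R | 0 <= c /\ forall v, hnorm ip (w v) <= c * hnorm ip v].
  have Sw1 : Sw 1 by split=> // v; rewrite mul1r.
  have Swlb : has_lbound Sw by exists 0 => d [].
  set c := opnorm ip w.
  have cE : c = inf Sw by [].
  have c0 : 0 <= c by rewrite cE; apply: lb_le_inf; [exists 1 | move=> d []].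
  have c1 : c <= 1 by rewrite cE; apply: ge_inf.
  have catt : forall v, hnorm ip (w v) <= c * hnorm ip v.
    move=> v; rewrite leNgt; apply/negP => hlt.
    have [hv0|hvpos] := eqVneq (hnorm ip v) 0.
      move: hlt; rewrite hv0 mulr0 => hlt.
      by have := contr v; rewrite hv0 leNgt hlt.
    have hv : 0 < hnorm ip v by rewrite lt0r hvpos hnorm_ge0.
    have : c < hnorm ip (w v) / hnorm ip v by rewrite ltr_pdivlMr.
    rewrite cE; case/(inf_lt (ex_intro _ 1 Sw1)) => e [_ He] hed.
    move: hed; rewrite ltr_pdivlMr // => hed.
    by move: (He v); rewrite leNgt hed.
  have [cz|cpos] := eqVneq c 0.
    have w0 : w Om = 0.
      apply: (hnorm_eq0 Hip); apply/le_anti; rewrite hnorm_ge0 andbT.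
      by have := catt Om; rewrite cz mul0r.
    by rewrite w0 T0 S0 subrr (hnorm0 Hip).
  have cp : 0 < c by rewrite lt0r cpos c0.
  pose z := fun v => ((c^-1)%:C)%C *: w v.
  have Mz : M z by apply: Mscal.
  have hz : forall v, hnorm ip (z v) = c^-1 * hnorm ip (w v).
    by move=> v; rewrite /z (hnormZ Hip) norm_realC ger0_norm // invr_ge0.
  have oz : opnorm ip z = 1.
    apply/le_anti/andP; split.
    - apply: ge_inf; first by exists 0 => d [].
      split=> // v. rewrite hz mul1r -(ler_pM2l cp) mulrA mulfV ?gt_eqF // mul1r.
      exact: catt.
    - apply: lb_le_inf.
        exists 1; split=> // v. rewrite hz mul1r -(ler_pM2l cp) mulrA mulfV ?gt_eqF // mul1r.
        exact: catt.
      move=> d [d0 hd].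
      have : c <= c * d.
        rewrite cE; apply: ge_inf => //; split; first by rewrite mulr_ge0.
        move=> v; have := hd v.
        by rewrite hz -(ler_pM2l cp) mulrA mulfV ?gt_eqF // mul1r mulrA.
      by rewrite -{1}(mulr1 c) (ler_pM2l cp).
  have hTS : hnorm ip (T (z Om) - S (z Om)) = c^-1 * hnorm ip (T (w Om) - S (w Om)).
    by rewrite /z TZ SZ -scalerBr (hnormZ Hip) norm_realC ger0_norm // invr_ge0.
  apply: (@le_trans _ _ (hnorm ip (T (z Om) - S (z Om)))%:E).
    rewrite lee_fin hTS.
    have X0 := @hnorm_ge0 _ _ ip (T (w Om) - S (w Om)).
    move: X0; set X := hnorm ip _ => X0.
    rewrite -(ler_pM2l cp) mulrA mulfV ?gt_eqF // mul1r. nra.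
  by apply: ereal_sup_ubound; right; exists z.
have entry : forall x, XM ip M x -> ((Lmat J x (negm x))%:E <= K)%E.
  move=> x [xM _ xc].
  rewrite /Lmat.
  apply: (big_ind (fun r => (r%:E <= K)%E)) => //.
    by move=> a b ha hb; rewrite /Num.max; case: ifP.
  move=> i _.
  apply: (big_ind (fun r => (r%:E <= K)%E)) => //.
    by move=> a b ha hb; rewrite /Num.max; case: ifP.
  move=> j _.
  rewrite /J /negm /= SN.
  apply: key => // v.
  have := xc (fun k => if k == j then v else 0).
  rewrite (hnorm2_single Hip); apply: le_trans.
  have -> : x i j v = act2 x (fun k => if k == j then v else 0) i.
    rewrite /act2 (bigD1 j) //= eqxx big1 ?addr0 // => k /negbTE ->.
    by case: (Mbnd _ (xM i k)) => /lin_props[-> _ _ _] _.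
  exact: hnorm2_ge.
apply: (@le_trans _ _ (distH ip M J)).
  by apply: ereal_inf_lbound; exists J.
rewrite /distH ge_max; apply/andP; split.
- apply: ge_ereal_sup => _ [x Hx <-].
  apply: le_trans (entry x Hx).
  by apply: ereal_inf_lbound; exists x.
- apply: ge_ereal_sup => _ [y Hy <-].
  apply: le_trans (entry y Hy).
  by apply: ereal_inf_lbound; exists y.
Qed.
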